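(* Let $\{g_d(n)\}_{d\geq 0,\,n\geq 1}$ be a double sequence of positive real numbers such that $g_d(1)=1$ for all $d\geq 0$ and \[ 0 \leq g_d(n) - n^d \leq \bigl(g_0(n)-1\bigr)\,(n-1)^{d}\qquad\text{for all } d\geq 0,\ n\geq 1 . \] Suppose there is a real number $r$ with $0<r\leq 1$ such that $q^{g_0}(n)\leq r^{-n}$ for all $n\geq 1$. For $n\geq 3$ define $D^{g}(n)$ by \[ D^{g}(n):=\begin{cases} -2\log_{9/8}(r)\, n, & n\equiv 0 \pmod 3,\\[2pt] \log_{9/8}(3)-2n\log_{9/8}(r)-\log_{9/8}(n+2), & n\equiv 1 \pmod 3,\\[2pt] \log_{9/8}(2)-(n+1)\log_{9/8}(r), & n\equiv 2 \pmod 3,\ n\neq 5,\\[2pt] \log_{9/8}\bigl(2\,q^{g_0}(4)\,q^{g_0}(6)\bigr), & n=5 . \end{cases} \] Let $n\geq 3$ and let $d$ be an integer with $d> D^{g}(n)$. Then \[ \frac{\bigl(q^{g_d}(n)\bigr)^2}{q^{g_d}(n-1)\,q^{g_d}(n+1)}<1 \quad\text{if and only if}\quad n\equiv 1 \pmod 3 . \]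
   Context: For a double sequence $\{g_d(n)\}_{d\geq 0,n\geq 1}$ of positive reals, the numbers $q^{g_d}(n)$ ($n\geq 0$) are defined as the coefficients of the power series \[ \sum_{n=0}^{\infty} q^{g_d}(n)\,t^n := \frac{1}{1-\sum_{n=1}^{\infty} g_d(n)\,t^n}, \] equivalently $q^{g_d}(0)=1$ and, for $n\geq 1$, $q^{g_d}(n)=\sum_{k\le n}\sum_{m_1+\dots+m_k=n,\ m_i\geq 1} g_d(m_1)\cdots g_d(m_k)$ (sum over all compositions of $n$). $\log_{9/8}$ denotes the logarithm to base $9/8$. *)

(* Defs.v *)
From Stdlib Require Import Reals Lra List.
Import ListNotations.
Open Scope R_scope.

Fixpoint comps_fuel (fuel n : nat) : list (list nat) :=
  match n with
  | O => [ [] ]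
  | S _ =>
    match fuel with
    | O => []
    | S f => flat_map (fun k => map (cons k) (comps_fuel f (n - k)%nat)) (seq 1 n)
    end
  end.

Definition compositions (n : nat) : list (list nat) := comps_fuel n n.

(* q^{g}(n) = sum over compositions (m_1,...,m_k) of n of g(m_1)...g(m_k);
   q^{g}(0) = 1 (empty composition). *)
Definition qg (g : nat -> R) (n : nat) : R :=
  fold_right Rplus 0
    (map (fun c => fold_right Rmult 1 (map g c)) (compositions n)).

Definition log98 (x : R) : R := ln x / ln (9/8).

Definition Dg (g0 : nat -> R) (r : R) (n : nat) : R :=
  if Nat.eqb (n mod 3) 0 then - 2 * log98 r * INR n
  else if Nat.eqb (n mod 3) 1 then
    log98 3 - 2 * INR n * log98 r - log98 (INR n + 2)
  else if Nat.eqb n 5 then log98 (2 * qg g0 4 * qg g0 6)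
  else log98 2 - (INR n + 1) * log98 r.

(* Main.v *)
Require Import Defs.
From Stdlib Require Import Reals List Lra Lia Arith.
Import ListNotations.

Open Scope nat_scope.

Fixpoint Mn (m:nat) : nat := match m with 0 => 1 | 1 => 1 | 2 => 2 | 3 => 3 | 4 => 4 | S (S (S k)) => 3 * Mn k end.

Lemma Mn_step k : 2 <= k -> Mn (S (S (S k))) = 3 * Mn k.
Proof. destruct k as [|[|k]]; [lia|lia|reflexivity]. Qed.

Lemma Mn0 i : Mn (3*i) = 3^i.
Proof. induction i as [|i IH]; [reflexivity|].
  destruct i as [|i]; [reflexivity|].
  replace (3 * S (S i)) with (S (S (S (3 * S i)))) by lia.
  rewrite Mn_step by lia. rewrite IH. simpl. lia. Qed.
Lemma Mn2 i : Mn (3*i+2) = 2*3^i.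
Proof. induction i as [|i IH]; [reflexivity|].
  replace (3 * S i + 2) with (S (S (S (3 * i + 2)))) by lia.
  rewrite Mn_step by lia. rewrite IH. simpl. lia. Qed.
Lemma Mn4 i : Mn (3*i+4) = 4*3^i.
Proof. induction i as [|i IH]; [reflexivity|].
  replace (3 * S i + 4) with (S (S (S (3 * i + 4)))) by lia.
  rewrite Mn_step by lia. rewrite IH. simpl. lia. Qed.

Lemma mcases m : (exists i, m = 3*i) \/ (exists i, m = 3*i+2) \/ m = 1 \/ (exists i, m = 3*i+4).
Proof.
  pose proof (Nat.div_mod m 3 ltac:(lia)) as H. pose proof (Nat.mod_upper_bound m 3 ltac:(lia)).
  destruct (m mod 3) as [|[|[|s]]] eqn:E; [left|..]; try lia.
  - exists (m/3). lia.
  - destruct (m/3) as [|q] eqn:Eq. { right; right; left. lia. }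
    right; right; right. exists q. lia.
  - right; left. exists (m/3). lia.
Qed.

Lemma pow3_pos i : 1 <= 3^i.
Proof. induction i; simpl; lia. Qed.

Ltac relk :=
  first
  [ match goal with i : nat, j : nat, k : nat |- _ =>
      first [ assert (k = i + j) by lia | assert (k = i + j + 1) by lia | assert (k = i + j + 2) by lia ];
      subst k; rewrite ?Nat.pow_add_r end
  | match goal with j : nat, k : nat |- _ =>
      first [ assert (k = j) by lia | assert (k = j + 1) by lia | assert (k = j + 2) by lia ];
      subst k; rewrite ?Nat.pow_add_r end
  | match goal with k : nat |- _ => assert (k = 0) by lia; subst k end
  | idtac ].

Lemma Mgap a b : Mn a * Mn b = Mn (a+b) \/ 9*(Mn a*Mn b) <= 8*Mn(a+b).
Proof.
  destruct (mcases (a+b)) as [[k Hk]|[[k Hk]|[Hk|[k Hk]]]]; rewrite Hk;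
  destruct (mcases a) as [[i ->]|[[i ->]|[->|[i ->]]]];
  destruct (mcases b) as [[j ->]|[[j ->]|[->|[j ->]]]]; try lia;
  rewrite ?Mn0, ?Mn2, ?Mn4; simpl Mn; relk;
  repeat match goal with x : nat |- _ => lazymatch goal with _ : 1 <= 3^x |- _ => fail | _ => pose proof (pow3_pos x) end end;
  simpl Nat.pow; first [left; nia | right; nia].
Qed.

Lemma Mn_pos m : 1 <= Mn m.
Proof. destruct (mcases m) as [[i ->]|[[i ->]|[->|[i ->]]]];
  rewrite ?Mn0, ?Mn2, ?Mn4; simpl; try pose proof (pow3_pos i); lia. Qed.

Lemma Mn_super a b : Mn a * Mn b <= Mn (a+b).
Proof. destruct (Mgap a b); lia. Qed.

Lemma pow3_lin i : 3*i <= 3^i.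
Proof. induction i as [|i IH]; simpl; [lia|]. pose proof (pow3_pos i). lia. Qed.

Lemma Mn_big j : 5 <= j -> 9*j <= 8*Mn j.
Proof.
  intros Hj. destruct (mcases j) as [[i ->]|[[i ->]|[->|[i ->]]]];
  rewrite ?Mn0, ?Mn2, ?Mn4; try lia.
  - destruct i as [|i]; [lia|]. rewrite Nat.pow_succ_r'. pose proof (pow3_lin i). lia.
  - pose proof (pow3_lin i). lia.
  - pose proof (pow3_lin i). lia.
Qed.

Lemma Mn_small j : 1 <= j <= 4 -> Mn j = j.
Proof. intros H. destruct j as [|[|[|[|[|j]]]]]; simpl; lia. Qed.

Lemma gapj m j : 1 <= j <= m -> j * Mn (m-j) = Mn m \/ 9*(j*Mn(m-j)) <= 8*Mn m.
Proof.
  intros H. destruct (Nat.le_gt_cases j 4).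
  - pose proof (Mgap j (m-j)) as G. rewrite (Mn_small j) in G by lia.
    replace (j + (m-j)) with m in G by lia. exact G.
  - right. pose proof (Mn_big j ltac:(lia)) as B1. pose proof (Mn_super j (m-j)) as B2.
    replace (j + (m-j)) with m in B2 by lia.
    pose proof (Nat.mul_le_mono_r _ _ (Mn (m-j)) B1). lia.
Qed.

Definition opt (m j : nat) : bool := Nat.eqb (j * Mn (m-j)) (Mn m).

Lemma opt_true m j : 1 <= j <= m -> opt m j = true -> j * Mn (m-j) = Mn m /\ j <= 4.
Proof.
  intros H E. unfold opt in E. apply Nat.eqb_eq in E. split; auto.
  destruct (Nat.le_gt_cases j 4); auto.
  pose proof (Mn_big j ltac:(lia)) as B1. pose proof (Mn_super j (m-j)) as B2.
  replace (j + (m-j)) with m in B2 by lia. pose proof (Mn_pos (m-j)).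
  pose proof (Nat.mul_le_mono_r _ _ (Mn (m-j)) B1). lia.
Qed.

Lemma opt_false m j : 1 <= j <= m -> opt m j = false -> 9*(j*Mn(m-j)) <= 8*Mn m.
Proof.
  intros H E. unfold opt in E. apply Nat.eqb_neq in E. destruct (gapj m j H); [lia|auto].
Qed.


Open Scope R_scope.

Definition sumR (f : nat -> R) (l : list nat) : R :=
  fold_right (fun k acc => f k + acc) 0 l.

Lemma flat_map_ext_in {A B} (f h : A -> list B) (l : list A) :
  (forall x, In x l -> f x = h x) -> flat_map f l = flat_map h l.
Proof.
  induction l as [|a l IH]; intros H; simpl; auto.
  rewrite H by (left; auto). rewrite IH; auto. intros; apply H; right; auto.
Qed.

Lemma comps_fuel_indep : forall f1 f2 m, (m <= f1)%nat -> (m <= f2)%nat ->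
  comps_fuel f1 m = comps_fuel f2 m.
Proof.
  induction f1 as [|f1 IH]; intros f2 m H1 H2.
  - assert (m = 0%nat) by lia. subst. destruct f2; reflexivity.
  - destruct m as [|m]. { destruct f2; reflexivity. }
    destruct f2 as [|f2]; [lia|]. cbn [comps_fuel].
    apply flat_map_ext_in. intros x Hx. apply in_seq in Hx.
    f_equal. apply IH; lia.
Qed.

Definition SL (l : list R) := fold_right Rplus 0 l.

Lemma SL_app l1 l2 : SL (l1 ++ l2) = SL l1 + SL l2.
Proof. induction l1; simpl; [ring|]. unfold SL in *. simpl. rewrite IHl1. ring. Qed.

Lemma SL_cons_map (g : nat -> R) k (L : list (list nat)) :
  SL (map (fun c => fold_right Rmult 1 (map g c)) (map (cons k) L)) =
  g k * SL (map (fun c => fold_right Rmult 1 (map g c)) L).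
Proof. induction L; unfold SL in *; simpl; [ring|]. rewrite IHL. ring. Qed.

Lemma qg_rec (g : nat -> R) (n : nat) :
  qg g (S n) = sumR (fun k => g k * qg g (S n - k)) (seq 1 (S n)).
Proof.
  unfold qg, compositions. change (fold_right Rplus 0) with SL.
  replace (comps_fuel (S n) (S n)) with
    (flat_map (fun k => map (cons k) (comps_fuel (S n - k) (S n - k))) (seq 1 (S n))).
  2:{ cbn [comps_fuel]. apply flat_map_ext_in. intros x Hx. apply in_seq in Hx.
      f_equal. apply comps_fuel_indep; lia. }
  generalize (seq 1 (S n)). intros l. induction l as [|a l IH]; [reflexivity|].
  cbn [flat_map]. rewrite map_app, SL_app, SL_cons_map, IH. reflexivity.
Qed.

Lemma qg_0 g : qg g 0 = 1.
Proof. unfold qg. simpl. ring. Qed.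

Definition cR (m:nat) : R :=
  match (m mod 3)%nat with
  | O => 1
  | 2%nat => INR (m/3) + 1
  | _ => if Nat.eqb m 1 then 1 else INR (m/3) * (INR (m/3) + 3) / 2
  end.

Lemma dm3 i s : (s < 3)%nat -> ((3*i+s) mod 3 = s /\ (3*i+s)/3 = i)%nat.
Proof. intros H. split; symmetry; [eapply Nat.mod_unique|eapply Nat.div_unique]; eauto. Qed.

Lemma cR0 i : cR (3*i) = 1.
Proof. unfold cR. replace (3*i)%nat with (3*i+0)%nat by lia.
  destruct (dm3 i 0 ltac:(lia)) as [-> _]. reflexivity. Qed.
Lemma cR2 i : cR (3*i+2) = INR i + 1.
Proof. unfold cR. destruct (dm3 i 2 ltac:(lia)) as [-> ->]. reflexivity. Qed.
Lemma cR4 i : cR (3*i+4) = (INR i + 1) * (INR i + 4) / 2.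
Proof. unfold cR. replace (3*i+4)%nat with (3*(i+1)+1)%nat by lia.
  destruct (dm3 (i+1) 1 ltac:(lia)) as [-> ->].
  destruct (Nat.eqb_spec (3*(i+1)+1) 1); [lia|]. rewrite plus_INR. simpl. field. Qed.
Lemma cR1 : cR 1 = 1.
Proof. reflexivity. Qed.

Lemma cR_nonneg m : 0 <= cR m.
Proof. destruct (mcases m) as [[i ->]|[[i ->]|[->|[i ->]]]];
  rewrite ?cR0, ?cR2, ?cR4, ?cR1; try pose proof (pos_INR i); try nra; lra. Qed.

Lemma sumR_zero f l : (forall x, In x l -> f x = 0) -> sumR f l = 0.
Proof. induction l as [|a l IH]; intros H; simpl; [lra|].
  rewrite H by (left; auto). rewrite IH; [lra|]. intros; apply H; right; auto. Qed.

Lemma sum_split4 f m : (4 <= m)%nat ->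
  sumR f (seq 1 m) = f 1%nat + (f 2%nat + (f 3%nat + (f 4%nat + sumR f (seq 5 (m-4))))).
Proof. intros H. replace m with (S (S (S (S (m-4))))) at 1 by lia. reflexivity. Qed.

Definition cF (m : nat) (j : nat) : R := if opt m j then cR (m-j) else 0.

Lemma cF_tail m : (4 <= m)%nat -> sumR (cF m) (seq 5 (m-4)) = 0.
Proof. intros H. apply sumR_zero. intros x Hx. apply in_seq in Hx. unfold cF.
  destruct (opt m x) eqn:E; auto. apply opt_true in E; lia. Qed.

Ltac optc i A B :=
  unfold opt; match goal with |- Nat.eqb (?j * Mn (?M - ?j)) (Mn ?M) = _ =>
    replace (M - j)%nat with A by lia; replace M with B by lia end;
  rewrite ?Mn0, ?Mn2, ?Mn4, ?Nat.pow_add_r;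
  let x := fresh in pose proof (pow3_pos i) as x; simpl Nat.pow;
  first [apply Nat.eqb_eq; lia | apply Nat.eqb_neq; lia].

Lemma cF_sum m : (1 <= m)%nat -> sumR (cF m) (seq 1 m) = cR m.
Proof.
  intros Hm.
  destruct (le_lt_dec m 5) as [Hs|Hb].
  { destruct m as [|[|[|[|[|[|m]]]]]]; try lia; unfold cF, opt; simpl;
    unfold cR; simpl; lra. }
  rewrite sum_split4 by lia. rewrite cF_tail by lia. unfold cF.
  destruct (mcases m) as [[i ->]|[[i ->]|[->|[i ->]]]]; [| | lia |].
  - destruct i as [|[|i]]; try lia.
    replace (3 * S (S i))%nat with (3*i+6)%nat by lia.
    assert (E1 : opt (3*i+6) 1 = false) by optc i (3*(i+1)+2)%nat (3*(i+2))%nat.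
    assert (E2 : opt (3*i+6) 2 = false) by optc i (3*i+4)%nat (3*(i+2))%nat.
    assert (E3 : opt (3*i+6) 3 = true) by optc i (3*(i+1))%nat (3*(i+2))%nat.
    assert (E4 : opt (3*i+6) 4 = false) by optc i (3*i+2)%nat (3*(i+2))%nat.
    rewrite E1, E2, E3, E4. replace (3*i+6-3)%nat with (3*(i+1))%nat by lia.
    replace (3*i+6)%nat with (3*(i+2))%nat by lia. rewrite !cR0. lra.
  - destruct i as [|i]; try lia.
    replace (3 * S i + 2)%nat with (3*i+5)%nat by lia.
    destruct i as [|i].
    + unfold opt; simpl. unfold cR; simpl. lra.
    + replace (3 * S i + 5)%nat with (3*i+8)%nat by lia.
      assert (E1 : opt (3*i+8) 1 = false) by optc i (3*(i+1)+4)%nat (3*(i+2)+2)%nat.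
      assert (E2 : opt (3*i+8) 2 = true) by optc i (3*(i+2))%nat (3*(i+2)+2)%nat.
      assert (E3 : opt (3*i+8) 3 = true) by optc i (3*(i+1)+2)%nat (3*(i+2)+2)%nat.
      assert (E4 : opt (3*i+8) 4 = false) by optc i (3*i+4)%nat (3*(i+2)+2)%nat.
      rewrite E1, E2, E3, E4.
      replace (3*i+8-2)%nat with (3*(i+2))%nat by lia.
      replace (3*i+8-3)%nat with (3*(i+1)+2)%nat by lia.
      replace (3*i+8)%nat with (3*(i+2)+2)%nat by lia.
      rewrite cR0, !cR2, !plus_INR. simpl. lra.
  - destruct i as [|i].
    + unfold opt; simpl. unfold cR; simpl. lra.
    + replace (3 * S i + 4)%nat with (3*i+7)%nat by lia.
      assert (E1 : opt (3*i+7) 1 = false) by optc i (3*(i+2))%nat (3*(i+1)+4)%nat.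
      assert (E2 : opt (3*i+7) 2 = true) by optc i (3*(i+1)+2)%nat (3*(i+1)+4)%nat.
      assert (E3 : opt (3*i+7) 3 = true) by optc i (3*i+4)%nat (3*(i+1)+4)%nat.
      assert (E4 : opt (3*i+7) 4 = true) by optc i (3*(i+1))%nat (3*(i+1)+4)%nat.
      rewrite E1, E2, E3, E4.
      replace (3*i+7-2)%nat with (3*(i+1)+2)%nat by lia.
      replace (3*i+7-3)%nat with (3*i+4)%nat by lia.
      replace (3*i+7-4)%nat with (3*(i+1))%nat by lia.
      replace (3*i+7)%nat with (3*(i+1)+4)%nat by lia.
      rewrite cR0, cR2, !cR4, !plus_INR. simpl. field.
Qed.

Lemma Q_rec G m : (1 <= m)%nat -> qg G m = sumR (fun k => G k * qg G (m - k)) (seq 1 m).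
Proof. intros H. destruct m; [lia|]. apply qg_rec. Qed.

Lemma sumR_nonneg f l : (forall x, In x l -> 0 <= f x) -> 0 <= sumR f l.
Proof. induction l as [|a l IH]; intros H; simpl; [lra|].
  pose proof (H a (or_introl eq_refl)). assert (0 <= sumR f l) by (apply IH; intros; apply H; right; auto). lra. Qed.

Lemma sumR_le f h l : (forall x, In x l -> f x <= h x) -> sumR f l <= sumR h l.
Proof. induction l as [|a l IH]; intros H; simpl; [lra|].
  pose proof (H a (or_introl eq_refl)). assert (sumR f l <= sumR h l) by (apply IH; intros; apply H; right; auto). lra. Qed.

Lemma sumR_lin A t f h l :
  sumR (fun k => A * (f k + t * (h k - f k))) l = A * (sumR f l + t * (sumR h l - sumR f l)).
Proof. induction l as [|a l IH]; simpl; [ring|]. rewrite IH. ring. Qed.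

Lemma sum_split3 f m : (3 <= m)%nat ->
  sumR f (seq 1 m) = f 1%nat + (f 2%nat + (f 3%nat + sumR f (seq 4 (m-3)))).
Proof. intros H. replace m with (S (S (S (m-3)))) at 1 by lia. reflexivity. Qed.

Lemma Q_ge1 G : G 1%nat = 1 -> (forall j, (1 <= j)%nat -> 0 <= G j) -> forall m, 1 <= qg G m.
Proof.
  intros H1 Hp m. induction m as [m IH] using lt_wf_ind.
  destruct m as [|m]. { rewrite qg_0. lra. }
  rewrite qg_rec. change (seq 1 (S m)) with (1%nat :: seq 2 m).
  change (sumR ?f (?a :: ?l)) with (f a + sumR f l). cbv beta.
  rewrite H1. replace (S m - 1)%nat with m by lia.
  assert (1 <= qg G m) by (apply IH; lia).
  assert (0 <= sumR (fun k => G k * qg G (S m - k)) (seq 2 m)).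
  { apply sumR_nonneg. intros x Hx. apply in_seq in Hx.
    assert (1 <= qg G (S m - x)) by (apply IH; lia). pose proof (Hp x ltac:(lia)). nra. }
  lra.
Qed.

Lemma INR_pow_mul a b d : INR a ^ d * INR b ^ d = INR (a*b) ^ d.
Proof. rewrite mult_INR, Rpow_mult_distr. reflexivity. Qed.

Lemma pow_le1 x n : 0 <= x <= 1 -> x ^ n <= 1.
Proof. intros H. induction n; simpl; [lra|]. pose proof (pow_le x n ltac:(lra)). nra. Qed.

Section Bounds.
Variables (G G0 : nat -> R) (d : nat).
Hypothesis hG1 : G 1%nat = 1.
Hypothesis hG01 : G0 1%nat = 1.
Hypothesis hG0 : forall j, (1 <= j)%nat -> 1 <= G0 j.
Hypothesis hGlow : forall j, (1 <= j)%nat -> INR j ^ d <= G j.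
Hypothesis hGup : forall j, (1 <= j)%nat -> G j <= INR j ^ d + (G0 j - 1) * INR (j-1) ^ d.

Lemma G_nonneg j : (1 <= j)%nat -> 0 <= G j.
Proof. intros H. pose proof (hGlow j H). pose proof (pow_le (INR j) d (pos_INR j)). lra. Qed.

Lemma Qge1 m : 1 <= qg G m.
Proof. apply Q_ge1; auto. apply G_nonneg. Qed.
Lemma Q0ge1 m : 1 <= qg G0 m.
Proof. apply Q_ge1; auto. intros j Hj; pose proof (hG0 j Hj); lra. Qed.

Lemma L0 k : INR (Mn (3*k)) ^ d <= qg G (3*k).
Proof.
  induction k as [|k IH]. { rewrite qg_0. simpl. rewrite pow1. lra. }
  rewrite Q_rec by lia. rewrite sum_split3 by lia.
  replace (3 * S k - 3)%nat with (3*k)%nat by lia.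
  assert (0 <= sumR (fun k0 => G k0 * qg G (3 * S k - k0)) (seq 4 (3 * k))).
  { apply sumR_nonneg. intros x Hx. apply in_seq in Hx. pose proof (G_nonneg x ltac:(lia)).
    pose proof (Qge1 (3 * S k - x)). nra. }
  pose proof (G_nonneg 1 ltac:(lia)). pose proof (G_nonneg 2 ltac:(lia)).
  pose proof (Qge1 (3 * S k - 1)). pose proof (Qge1 (3 * S k - 2)).
  assert (INR (Mn (3 * S k)) ^ d <= G 3%nat * qg G (3*k)).
  { assert (E : Mn (3 * S k) = (3 * Mn (3*k))%nat) by (rewrite !Mn0; simpl; lia).
    rewrite E, <- INR_pow_mul.
    apply Rmult_le_compat; auto using pow_le, pos_INR. }
  assert (0 <= G 1%nat * qg G (3 * S k - 1)) by (apply Rmult_le_pos; lra).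
  assert (0 <= G 2%nat * qg G (3 * S k - 2)) by (apply Rmult_le_pos; lra).
  lra.
Qed.

Lemma L2 k : (INR k + 1) * INR (Mn (3*k+2)) ^ d <= qg G (3*k+2).
Proof.
  induction k as [|k IH].
  { rewrite Q_rec by lia. simpl seq. simpl sumR. rewrite qg_0.
    pose proof (hGlow 2 ltac:(lia)). pose proof (G_nonneg 1 ltac:(lia)).
    pose proof (Qge1 1). simpl Mn. simpl INR. replace (INR 2) with (1+1) in H by (simpl; lra). assert (0 <= G 1%nat * qg G 1) by (apply Rmult_le_pos; lra). lra. }
  rewrite Q_rec by lia. rewrite sum_split3 by lia.
  replace (3 * S k + 2 - 3)%nat with (3*k+2)%nat by lia.
  replace (3 * S k + 2 - 2)%nat with (3*(S k))%nat by lia.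
  assert (0 <= sumR (fun k0 => G k0 * qg G (3 * S k + 2 - k0)) (seq 4 (3 * k + 2))).
  { apply sumR_nonneg. intros x Hx. apply in_seq in Hx. pose proof (G_nonneg x ltac:(lia)).
    pose proof (Qge1 (3 * S k + 2 - x)). nra. }
  pose proof (G_nonneg 1 ltac:(lia)). pose proof (Qge1 (3 * S k + 2 - 1)).
  assert (A2 : INR (Mn (3 * S k + 2)) ^ d <= G 2%nat * qg G (3 * S k)).
  { assert (E : Mn (3 * S k + 2) = (2 * Mn (3 * S k))%nat) by (rewrite Mn2, Mn0; lia).
    rewrite E, <- INR_pow_mul. apply Rmult_le_compat; try apply pow_le; try apply pos_INR;
    try (apply hGlow; lia); try apply L0. }
  assert (A3 : (INR k + 1) * INR (Mn (3 * S k + 2)) ^ d <= G 3%nat * qg G (3 * k + 2)).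
  { assert (E : Mn (3 * S k + 2) = (3 * Mn (3 * k + 2))%nat) by (rewrite !Mn2; simpl; lia).
    rewrite E, <- INR_pow_mul. pose proof (hGlow 3 ltac:(lia)).
    pose proof (pow_le (INR 3) d (pos_INR 3)). pose proof (pos_INR k).
    pose proof (pow_le (INR (Mn (3*k+2))) d (pos_INR _)).
    pose proof (Qge1 (3*k+2)).
    assert (0 <= (G 3%nat - INR 3 ^ d) * qg G (3*k+2)) by (apply Rmult_le_pos; lra).
    assert (0 <= INR 3 ^ d * (qg G (3*k+2) - (INR k + 1) * INR (Mn (3 * k + 2)) ^ d))
      by (apply Rmult_le_pos; lra).
    nra. }
  rewrite S_INR. nra.
Qed.


Lemma CQ m : cR m <= qg G0 m.
Proof.
  induction m as [m IH] using lt_wf_ind.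
  destruct m as [|m]. { rewrite qg_0. unfold cR. simpl. lra. }
  rewrite <- cF_sum by lia. rewrite Q_rec by lia. apply sumR_le.
  intros x Hx. apply in_seq in Hx. unfold cF.
  pose proof (Q0ge1 (S m - x)). pose proof (hG0 x ltac:(lia)).
  destruct (opt (S m) x).
  - assert (cR (S m - x) <= qg G0 (S m - x)) by (apply IH; lia). nra.
  - nra.
Qed.

Lemma pm1 j : (1 <= j <= 9)%nat -> INR (j-1) ^ d <= (8/9)^d * INR j ^ d.
Proof.
  intros H. rewrite <- Rpow_mult_distr. apply pow_incr. split; [apply pos_INR|].
  rewrite minus_INR by lia. assert (INR 1 <= INR j) by (apply le_INR; lia).
  assert (INR j <= INR 9) by (apply le_INR; lia).
  replace (INR 9) with 9 in * by (simpl; lra). replace (INR 1) with 1 in * by (simpl; lra). lra.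
Qed.

Lemma U m : qg G m <= INR (Mn m) ^ d * (cR m + (8/9)^d * (qg G0 m - cR m)).
Proof.
  assert (Ht : 0 <= (8/9)^d <= 1).
  { split. apply pow_le; lra. apply pow_le1; lra. }
  induction m as [m IH] using lt_wf_ind.
  destruct m as [|m].
  { rewrite !qg_0. unfold cR. simpl. rewrite pow1. lra. }
  rewrite (Q_rec G) by lia. rewrite <- (cF_sum (S m)) by lia. rewrite (Q_rec G0 (S m)) by lia.
  rewrite <- sumR_lin. apply sumR_le.
  intros k Hk. apply in_seq in Hk.
  set (c' := cR (S m - k)). set (Q0' := qg G0 (S m - k)).
  set (Mp := INR (Mn (S m - k))). set (Mm := INR (Mn (S m))).
  assert (IHk : qg G (S m - k) <= Mp ^ d * (c' + (8/9)^d * (Q0' - c'))) by (apply IH; lia).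
  pose proof (cR_nonneg (S m - k)) as Hc. fold c' in Hc.
  pose proof (CQ (S m - k)) as Hcq. fold c' Q0' in Hcq.
  set (X := c' + (8/9)^d * (Q0' - c')) in *.
  assert (HX : 0 <= X <= Q0') by (unfold X; nra).
  pose proof (Qge1 (S m - k)) as HQ.
  pose proof (G_nonneg k ltac:(lia)) as HGk.
  pose proof (hG0 k ltac:(lia)) as HG0k.
  pose proof (hGup k ltac:(lia)) as HGu.
  assert (HMp : 0 <= Mp ^ d) by (apply pow_le, pos_INR).
  assert (Hk0 : 0 <= INR k ^ d) by (apply pow_le, pos_INR).
  unfold cF. fold c'. destruct (opt (S m) k) eqn:E.
  - apply opt_true in E; [|lia]. destruct E as [E Hk4].
    pose proof (pm1 k ltac:(lia)) as Hp.
    assert (HG : G k <= INR k ^ d * (1 + (G0 k - 1) * (8/9)^d)).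
    { assert (0 <= G0 k - 1) by lra.
      assert ((G0 k - 1) * INR (k-1) ^ d <= (G0 k - 1) * ((8/9)^d * INR k ^ d))
        by (apply Rmult_le_compat_l; lra). nra. }
    assert (HMM : INR k ^ d * Mp ^ d = Mm ^ d).
    { unfold Mp, Mm. rewrite INR_pow_mul, E. reflexivity. }
    set (e := (G0 k - 1) * (8/9)^d) in *.
    assert (He : 0 <= e) by (unfold e; apply Rmult_le_pos; lra).
    assert (S1 : G k * qg G (S m - k) <= INR k ^ d * (1 + e) * (Mp ^ d * X)).
    { apply Rmult_le_compat; try lra. }
    assert (S2 : INR k ^ d * (1 + e) * (Mp ^ d * X) = Mm ^ d * (X + e * X)) by (rewrite <- HMM; ring).
    assert (S3 : e * X <= e * Q0') by (apply Rmult_le_compat_l; lra).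
    assert (HMm : 0 <= Mm ^ d) by (apply pow_le, pos_INR).
    assert (S4 : Mm ^ d * (X + e * X) <= Mm ^ d * (X + e * Q0')) by (apply Rmult_le_compat_l; lra).
    replace (Mm ^ d * (c' + (8 / 9) ^ d * (G0 k * Q0' - c'))) with (Mm ^ d * (X + e * Q0'))
      by (unfold X, e; ring).
    lra.
  - apply opt_false in E; [|lia].
    assert (HG : G k <= G0 k * INR k ^ d).
    { assert (INR (k-1) ^ d <= INR k ^ d).
      { apply pow_incr. split; [apply pos_INR|]. apply le_INR; lia. }
      assert ((G0 k - 1) * INR (k-1) ^ d <= (G0 k - 1) * INR k ^ d)
        by (apply Rmult_le_compat_l; lra). nra. }
    assert (HKM : INR k ^ d * Mp ^ d <= (8/9)^d * Mm ^ d).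
    { unfold Mp, Mm. rewrite INR_pow_mul, <- Rpow_mult_distr. apply pow_incr.
      split; [apply pos_INR|]. apply le_INR in E. rewrite !mult_INR in E.
      rewrite mult_INR. replace (INR 9) with 9 in E by (simpl; lra).
      replace (INR 8) with 8 in E by (simpl; lra). lra. }
    assert (S1 : G k * qg G (S m - k) <= G0 k * INR k ^ d * (Mp ^ d * Q0')).
    { apply Rmult_le_compat; try lra. nra. }
    assert (S2 : G0 k * INR k ^ d * (Mp ^ d * Q0') <= G0 k * ((8/9)^d * Mm ^ d) * Q0').
    { replace (G0 k * INR k ^ d * (Mp ^ d * Q0')) with (G0 k * (INR k ^ d * Mp ^ d) * Q0') by ring.
      apply Rmult_le_compat_r; [lra|]. apply Rmult_le_compat_l; lra. }
    replace (Mm ^ d * (0 + (8 / 9) ^ d * (G0 k * Q0' - 0))) with (G0 k * ((8/9)^d * Mm ^ d) * Q0')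
      by ring.
    lra.
Qed.

Lemma Ucrude m : qg G m <= INR (Mn m) ^ d * qg G0 m.
Proof.
  pose proof (U m). pose proof (CQ m). pose proof (cR_nonneg m).
  assert (0 <= (8/9)^d <= 1) by (split; [apply pow_le; lra | apply pow_le1; lra]).
  assert (0 <= INR (Mn m) ^ d) by (apply pow_le, pos_INR).
  assert (cR m + (8/9)^d * (qg G0 m - cR m) <= qg G0 m) by nra.
  assert (INR (Mn m) ^ d * (cR m + (8/9)^d * (qg G0 m - cR m)) <= INR (Mn m) ^ d * qg G0 m)
    by (apply Rmult_le_compat_l; lra).
  lra.
Qed.

End Bounds.

Lemma L98 : 0 < ln (9/8).
Proof. rewrite <- ln_1. apply ln_increasing; lra. Qed.

Lemma exp_conv (d : nat) (Z : R) : 0 < Z -> INR d > ln Z / ln (9/8) -> Z * (8/9)^d < 1.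
Proof.
  intros HZ Hd. pose proof L98.
  assert (ln Z < ln ((9/8)^d)).
  { rewrite ln_pow by lra. apply Rmult_gt_compat_r with (r := ln (9/8)) in Hd; [|lra].
    unfold Rdiv in Hd. rewrite Rmult_assoc, Rinv_l in Hd by lra. lra. }
  apply ln_lt_inv in H0; [|lra|apply pow_lt; lra].
  assert (0 < (8/9)^d) by (apply pow_lt; lra).
  assert ((9/8)^d * (8/9)^d = 1) by (rewrite <- Rpow_mult_distr; replace (9/8*(8/9)) with 1 by field; apply pow1).
  nra.
Qed.

Lemma INR_pow_eq a b d : a = b -> INR a ^ d = INR b ^ d.
Proof. intros ->; reflexivity. Qed.

Lemma ratio_lt A B C : 0 < B -> 0 < C -> A^2 < B*C -> A^2/(B*C) < 1.
Proof. intros. apply Rmult_lt_reg_r with (B*C); [nra|]. unfold Rdiv. rewrite Rmult_assoc, Rinv_l by nra. lra. Qed.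

Lemma ratio_ge A B C : 0 < B -> 0 < C -> B*C < A^2 -> ~ (A^2/(B*C) < 1).
Proof. intros HB HC H Hlt. apply Rmult_lt_compat_r with (r := B*C) in Hlt; [|nra].
  unfold Rdiv in Hlt. rewrite Rmult_assoc, Rinv_l in Hlt by nra. lra. Qed.

Theorem theorem1 (g : nat -> nat -> R) (r : R)
  (hpos : forall d n : nat, (1 <= n)%nat -> 0 < g d n)
  (h1 : forall d : nat, g d 1%nat = 1)
  (hlow : forall d n : nat, (1 <= n)%nat -> 0 <= g d n - INR n ^ d)
  (hup : forall d n : nat, (1 <= n)%nat ->
           g d n - INR n ^ d <= (g 0%nat n - 1) * INR (n - 1) ^ d)
  (hr0 : 0 < r) (hr1 : r <= 1)
  (hq : forall n : nat, (1 <= n)%nat -> qg (g 0%nat) n <= / r ^ n)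
  (n d : nat) (hn : (3 <= n)%nat) (hd : INR d > Dg (g 0%nat) r n) :
  (qg (g d) n ^ 2 / (qg (g d) (n - 1) * qg (g d) (n + 1)) < 1
   <-> (n mod 3 = 1)%nat).
Proof.
  set (G := g d). set (G0 := g 0%nat).
  assert (hG1 : G 1%nat = 1) by apply h1.
  assert (hG01 : G0 1%nat = 1) by apply h1.
  assert (hG0 : forall j, (1 <= j)%nat -> 1 <= G0 j).
  { intros j Hj. pose proof (hlow 0%nat j Hj). simpl in H. unfold G0. lra. }
  assert (hGlow : forall j, (1 <= j)%nat -> INR j ^ d <= G j).
  { intros j Hj. pose proof (hlow d j Hj). unfold G. lra. }
  assert (hGup : forall j, (1 <= j)%nat -> G j <= INR j ^ d + (G0 j - 1) * INR (j-1) ^ d).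
  { intros j Hj. pose proof (hup d j Hj). unfold G, G0. lra. }
  pose proof (L0 G d hG1 hGlow) as HL0.
  pose proof (L2 G d hG1 hGlow) as HL2.
  pose proof (U G G0 d hG1 hG01 hG0 hGlow hGup) as HU.
  pose proof (Ucrude G G0 d hG1 hG01 hG0 hGlow hGup) as HUc.
  assert (HQ : forall m, 1 <= qg G m).
  { apply Q_ge1; auto. intros j Hj. pose proof (hGlow j Hj). pose proof (pow_le (INR j) d (pos_INR j)). lra. }
  assert (HQ0 : forall m, 1 <= qg G0 m).
  { apply Q_ge1; auto. intros j Hj. pose proof (hG0 j Hj). lra. }
  set (rho := / r). assert (Hrho : 1 <= rho).
  { unfold rho. rewrite <- Rinv_1. apply Rinv_le_contravar; lra. }
  assert (hq' : forall m, (1 <= m)%nat -> qg G0 m <= rho ^ m).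
  { intros m Hm. unfold rho. rewrite pow_inv. apply hq; auto. }
  set (th := (8/9)^d). assert (Hth : 0 < th) by (apply pow_lt; lra).
  assert (HMpow : forall m, 0 < INR (Mn m) ^ d).
  { intros m. apply pow_lt. apply lt_0_INR. pose proof (Mn_pos m). lia. }
  assert (Hmul : forall a b, INR (Mn a) ^ d * INR (Mn b) ^ d = INR (Mn a * Mn b) ^ d).
  { intros. apply INR_pow_mul. }
  pose proof L98 as HL.
  unfold Dg in hd. fold G0 in hd.
  destruct (mcases n) as [[k ->]|[[k ->]|[->|[i ->]]]]; [| |lia|].
  -
    assert (Hk : (1 <= k)%nat) by lia.
    replace ((3*k) mod 3)%nat with 0%nat in * by (replace (3*k)%nat with (3*k+0)%nat by lia; symmetry; apply dm3; lia).
    split; [|lia]. intros Hlt. exfalso. revert Hlt. fold G.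
    assert (HZ : rho ^ (2 * (3*k)) * th < 1).
    { apply exp_conv. apply pow_lt; lra.
      replace (ln (rho ^ (2 * (3 * k))) / ln (9 / 8)) with (- 2 * log98 r * INR (3 * k)); [exact hd|].
      unfold log98, rho. rewrite ln_pow, ln_Rinv by (try apply Rinv_0_lt_compat; lra).
      rewrite !mult_INR. replace (INR 2) with 2 by (simpl; lra). field. lra. }
    apply ratio_ge; try (pose proof (HQ (3*k-1)%nat); pose proof (HQ (3*k+1)%nat); lra).
    set (M1 := Mn (3*k-1)). set (M2 := Mn (3*k+1)). set (M0 := Mn (3*k)).
    assert (EM : (9 * (M1 * M2) = 8 * (M0 * M0))%nat).
    { unfold M1, M2, M0. destruct k as [|k]; [lia|].
      replace (3 * S k - 1)%nat with (3*k+2)%nat by lia.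
      replace (3 * S k + 1)%nat with (3*k+4)%nat by lia.
      rewrite Mn2, Mn4, Mn0. simpl. nia. }
    assert (EP : INR (M1 * M2) ^ d = th * INR (M0*M0) ^ d).
    { unfold th. rewrite <- Rpow_mult_distr. f_equal.
      apply (f_equal INR) in EM. rewrite !mult_INR in EM. rewrite !mult_INR.
      replace (INR 9) with 9 in EM by (simpl; lra). replace (INR 8) with 8 in EM by (simpl; lra). lra. }
    pose proof (HUc (3*k-1)%nat) as B1. pose proof (HUc (3*k+1)%nat) as C1.
    pose proof (hq' (3*k-1)%nat ltac:(lia)) as B2. pose proof (hq' (3*k+1)%nat ltac:(lia)) as C2.
    pose proof (HL0 k) as A1. fold M0 in A1. fold M1 in B1. fold M2 in C1.
    pose proof (HMpow (3*k-1)%nat) as P1. pose proof (HMpow (3*k+1)%nat) as P2. fold M1 in P1. fold M2 in P2.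
    assert (BC : qg G (3*k-1) * qg G (3*k+1) <= INR M1 ^ d * INR M2 ^ d * (rho ^ (3*k-1) * rho ^ (3*k+1))).
    { pose proof (HQ (3*k-1)%nat). pose proof (HQ (3*k+1)%nat).
      pose proof (HQ0 (3*k-1)%nat). pose proof (HQ0 (3*k+1)%nat).
      assert (qg G (3*k-1) <= INR M1 ^ d * rho ^ (3*k-1)) by nra.
      assert (qg G (3*k+1) <= INR M2 ^ d * rho ^ (3*k+1)) by nra.
      replace (INR M1 ^ d * INR M2 ^ d * (rho ^ (3 * k - 1) * rho ^ (3 * k + 1)))
        with ((INR M1 ^ d * rho ^ (3*k-1)) * (INR M2 ^ d * rho ^ (3*k+1))) by ring.
      apply Rmult_le_compat; lra. }
    rewrite <- pow_add in BC. replace (3*k-1 + (3*k+1))%nat with (2*(3*k))%nat in BC by lia.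
    rewrite INR_pow_mul, EP, <- INR_pow_mul in BC.
    pose proof (HMpow (3*k)%nat) as P0. fold M0 in P0.
    assert (0 < rho ^ (2*(3*k))) by (apply pow_lt; lra).
    assert (INR M0 ^ d * INR M0 ^ d <= qg G (3*k) ^ 2).
    { replace (qg G (3*k) ^ 2) with (qg G (3*k) * qg G (3*k)) by ring. apply Rmult_le_compat; lra. }
    assert (0 < INR M0 ^ d * INR M0 ^ d) by (apply Rmult_lt_0_compat; lra).
    assert ((INR M0 ^ d * INR M0 ^ d) * (rho ^ (2 * (3 * k)) * th) < (INR M0 ^ d * INR M0 ^ d) * 1)
      by (apply Rmult_lt_compat_l; lra).
    replace (th * (INR M0 ^ d * INR M0 ^ d) * rho ^ (2 * (3 * k))) with
      ((INR M0 ^ d * INR M0 ^ d) * (rho ^ (2 * (3 * k)) * th)) in BC by ring.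
    lra.
  -
    destruct (dm3 k 2 ltac:(lia)) as [Emod _]. rewrite Emod in *.
    split; [|lia]. intros Hlt. exfalso. revert Hlt. fold G.
    destruct k as [|j]; [lia|].
    replace (3 * S j + 2 - 1)%nat with (3*j+4)%nat by lia.
    replace (3 * S j + 2 + 1)%nat with (3*(j+2))%nat by lia.
    assert (Half : th * qg G0 (3*j+4) < 1/2 /\ th * qg G0 (3*(j+2)) < 1/2).
    { simpl Nat.eqb in hd. cbv iota in hd.
      pose proof (HQ0 (3*j+4)%nat). pose proof (HQ0 (3*(j+2))%nat).
      destruct j as [|j].
      - simpl Nat.eqb in hd. cbv iota in hd.
        assert (HZ : 2 * qg G0 4 * qg G0 6 * th < 1).
        { pose proof (HQ0 4%nat). pose proof (HQ0 6%nat). apply exp_conv; [nra|exact hd]. }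
        pose proof (HQ0 4%nat). pose proof (HQ0 6%nat).
        replace (3*0+4)%nat with 4%nat by lia. replace (3*(0+2))%nat with 6%nat by lia.
        split; nra.
      - match type of hd with context [if ?t then _ else _] =>
          replace t with false in hd by (symmetry; apply Nat.eqb_neq; lia) end.
        assert (HZ : 2 * rho ^ (3 * S (S j) + 2 + 1) * th < 1).
        { apply exp_conv; [apply Rmult_lt_0_compat; [lra|apply pow_lt; lra]|].
          replace (ln (2 * rho ^ (3 * S (S j) + 2 + 1)) / ln (9 / 8)) with
            (log98 2 - (INR (3 * S (S j) + 2) + 1) * log98 r); [exact hd|].
          unfold log98. rewrite ln_mult, ln_pow; try lra; try (apply pow_lt; lra).
          unfold rho. rewrite ln_Rinv by lra. rewrite (plus_INR _ 1). simpl (INR 1). field. lra. }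
        pose proof (hq' (3 * S j + 4)%nat ltac:(lia)).
        pose proof (hq' (3 * (S j + 2))%nat ltac:(lia)).
        assert (rho ^ (3 * S j + 4) <= rho ^ (3 * S (S j) + 2 + 1)) by (apply Rle_pow; [lra|lia]).
        replace (3 * (S j + 2))%nat with (3 * S (S j) + 2 + 1)%nat in * by lia.
        split; nra. }
    destruct Half as [HB HC].
    apply ratio_ge; try (pose proof (HQ (3*j+4)%nat); pose proof (HQ (3*(j+2))%nat); lra).
    set (MA := Mn (3*S j+2)). set (MB := Mn (3*j+4)). set (MC := Mn (3*(j+2))).
    assert (EM : (MA * MA = MB * MC)%nat).
    { unfold MA, MB, MC. rewrite Mn4, Mn0, Mn2. rewrite Nat.pow_add_r. simpl. nia. }
    pose proof (HU (3*j+4)%nat) as B1. fold MB in B1. rewrite cR4 in B1.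
    pose proof (HU (3*(j+2))%nat) as C1. fold MC in C1. rewrite cR0 in C1.
    pose proof (HL2 (S j)) as A1. fold MA in A1. rewrite S_INR in A1.
    pose proof (HMpow (3*S j+2)%nat) as PA. fold MA in PA.
    pose proof (HMpow (3*j+4)%nat) as PB. fold MB in PB.
    pose proof (HMpow (3*(j+2))%nat) as PC. fold MC in PC.
    pose proof (pos_INR j).
    set (cB := (INR j + 1) * (INR j + 4) / 2) in *.
    assert (HcB : 0 <= cB) by (unfold cB; nra).
    assert (B2 : qg G (3*j+4) <= INR MB ^ d * (cB + 1/2)).
    { assert (th * (qg G0 (3*j+4) - cB) <= 1/2) by nra.
      assert (INR MB ^ d * (cB + th * (qg G0 (3*j+4) - cB)) <= INR MB ^ d * (cB + 1/2))
        by (apply Rmult_le_compat_l; lra). unfold th in *. lra. }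
    assert (C2 : qg G (3*(j+2)) <= INR MC ^ d * (3/2)).
    { assert (th * (qg G0 (3*(j+2)) - 1) <= 1/2) by nra.
      assert (INR MC ^ d * (1 + th * (qg G0 (3*(j+2)) - 1)) <= INR MC ^ d * (3/2))
        by (apply Rmult_le_compat_l; lra). unfold th in *. lra. }
    pose proof (HQ (3*j+4)%nat). pose proof (HQ (3*(j+2))%nat).
    assert (BC : qg G (3*j+4) * qg G (3*(j+2)) <= (INR MB ^ d * INR MC ^ d) * ((cB + 1/2) * (3/2))).
    { replace ((INR MB ^ d * INR MC ^ d) * ((cB + 1/2) * (3/2))) with
        ((INR MB ^ d * (cB + 1/2)) * (INR MC ^ d * (3/2))) by ring.
      apply Rmult_le_compat; lra. }
    assert (EP : INR MA ^ d * INR MA ^ d = INR MB ^ d * INR MC ^ d).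
    { rewrite !INR_pow_mul, EM. reflexivity. }
    set (P := INR MB ^ d * INR MC ^ d) in *.
    assert (HP : 0 < P) by (unfold P; apply Rmult_lt_0_compat; lra).
    assert (A2 : (INR j + 1 + 1) ^ 2 * P <= qg G (3 * S j + 2) ^ 2).
    { rewrite <- EP. replace ((INR j + 1 + 1) ^ 2 * (INR MA ^ d * INR MA ^ d)) with
        (((INR j + 1 + 1) * INR MA ^ d) * ((INR j + 1 + 1) * INR MA ^ d)) by ring.
      replace (qg G (3 * S j + 2) ^ 2) with (qg G (3 * S j + 2) * qg G (3 * S j + 2)) by ring.
      assert (0 <= (INR j + 1 + 1) * INR MA ^ d) by (apply Rmult_le_pos; lra).
      apply Rmult_le_compat; lra. }
    assert (Hk : (cB + 1/2) * (3/2) < (INR j + 1 + 1) ^ 2) by (unfold cB; nra).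
    assert (P * ((cB + 1/2) * (3/2)) < P * (INR j + 1 + 1) ^ 2) by (apply Rmult_lt_compat_l; lra).
    lra.
  -
    replace ((3*i+4) mod 3)%nat with 1%nat in * by
      (replace (3*i+4)%nat with (3*(i+1)+1)%nat by lia; symmetry; apply dm3; lia).
    split; [intros; reflexivity|intros _]. fold G.
    simpl Nat.eqb in hd. cbv iota in hd.
    assert (Hn2 : 0 < INR (3*i+4) + 2) by (pose proof (pos_INR (3*i+4)); lra).
    assert (HZ : 3 * rho ^ (2 * (3*i+4)) * / (INR (3*i+4) + 2) * th < 1).
    { apply exp_conv.
      { apply Rmult_lt_0_compat; [|apply Rinv_0_lt_compat; lra].
        apply Rmult_lt_0_compat; [lra|apply pow_lt; lra]. }
      replace (ln (3 * rho ^ (2 * (3*i+4)) * / (INR (3*i+4) + 2)) / ln (9 / 8))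
        with (log98 3 - 2 * INR (3 * i + 4) * log98 r - log98 (INR (3 * i + 4) + 2)); [exact hd|].
      assert (0 < rho) by lra.
      unfold log98. rewrite !ln_mult, ln_pow, ln_Rinv; try lra;
        try (apply pow_lt; lra); try (apply Rinv_0_lt_compat; lra);
        try (apply Rmult_lt_0_compat; [lra|apply pow_lt; lra]).
      unfold rho. rewrite ln_Rinv; try lra;
        try (apply pow_lt; lra); try (apply Rinv_0_lt_compat; lra);
        try (apply Rmult_lt_0_compat; [lra|apply pow_lt; lra]).
      rewrite mult_INR. replace (INR 2) with 2 by (simpl; lra). field. lra. }
    assert (Ei : INR (3*i+4) + 2 = 3 * (INR i + 2)).
    { rewrite plus_INR, mult_INR. simpl. lra. }
    rewrite Ei in HZ.
    assert (HZ' : rho ^ (2 * (3*i+4)) * th < INR i + 2).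
    { pose proof (pos_INR i).
      replace (3 * rho ^ (2 * (3 * i + 4)) * / (3 * (INR i + 2)) * th) with
        (rho ^ (2 * (3 * i + 4)) * th / (INR i + 2)) in HZ by (field; lra).
      apply Rmult_lt_compat_r with (r := INR i + 2) in HZ; [|lra].
      unfold Rdiv in HZ. rewrite Rmult_assoc, Rinv_l in HZ by lra. lra. }
    replace (3*i+4-1)%nat with (3*(i+1))%nat by lia.
    replace (3*i+4+1)%nat with (3*(i+1)+2)%nat by lia.
    apply ratio_lt; try (pose proof (HQ (3*(i+1))%nat); pose proof (HQ (3*(i+1)+2)%nat); lra).
    set (MA := Mn (3*i+4)). set (MB := Mn (3*(i+1))). set (MC := Mn (3*(i+1)+2)).
    assert (EM : (9 * (MA * MA) = 8 * (MB * MC))%nat).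
    { unfold MA, MB, MC. rewrite Mn4, Mn0, Mn2. rewrite Nat.pow_add_r. simpl. nia. }
    assert (EP : INR (MA * MA) ^ d = th * INR (MB * MC) ^ d).
    { unfold th. rewrite <- Rpow_mult_distr. f_equal.
      apply (f_equal INR) in EM. rewrite !mult_INR in EM. rewrite !mult_INR.
      replace (INR 9) with 9 in EM by (simpl; lra). replace (INR 8) with 8 in EM by (simpl; lra). lra. }
    pose proof (HUc (3*i+4)%nat) as A1. fold MA in A1.
    pose proof (hq' (3*i+4)%nat ltac:(lia)) as A2.
    pose proof (HL0 (i+1)%nat) as B1. fold MB in B1.
    pose proof (HL2 (i+1)%nat) as C1. fold MC in C1. rewrite plus_INR in C1. simpl INR in C1.
    pose proof (HMpow (3*i+4)%nat) as PA. fold MA in PA.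
    pose proof (HMpow (3*(i+1))%nat) as PB. fold MB in PB.
    pose proof (HMpow (3*(i+1)+2)%nat) as PC. fold MC in PC.
    pose proof (HQ (3*i+4)%nat). pose proof (HQ0 (3*i+4)%nat). pose proof (pos_INR i).
    assert (A3 : qg G (3*i+4) <= INR MA ^ d * rho ^ (3*i+4)) by nra.
    assert (A4 : qg G (3*i+4) ^ 2 <= INR MA ^ d * INR MA ^ d * rho ^ (2*(3*i+4))).
    { replace (2*(3*i+4))%nat with ((3*i+4) + (3*i+4))%nat by lia. rewrite pow_add.
      replace (qg G (3*i+4) ^ 2) with (qg G (3*i+4) * qg G (3*i+4)) by ring.
      replace (INR MA ^ d * INR MA ^ d * (rho ^ (3 * i + 4) * rho ^ (3 * i + 4))) with
        ((INR MA ^ d * rho ^ (3 * i + 4)) * (INR MA ^ d * rho ^ (3 * i + 4))) by ring.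
      apply Rmult_le_compat; lra. }
    rewrite INR_pow_mul, EP, <- INR_pow_mul in A4.
    set (P := INR MB ^ d * INR MC ^ d) in *.
    assert (HP : 0 < P) by (unfold P; apply Rmult_lt_0_compat; lra).
    assert (BC : (INR i + 2) * P <= qg G (3*(i+1)) * qg G (3*(i+1)+2)).
    { unfold P. replace ((INR i + 2) * (INR MB ^ d * INR MC ^ d)) with
        (INR MB ^ d * ((INR i + 1 + 1) * INR MC ^ d)) by ring.
      apply Rmult_le_compat; try lra. apply Rmult_le_pos; [lra|]. lra. }
    assert (P * (rho ^ (2 * (3 * i + 4)) * th) < P * (INR i + 2)) by (apply Rmult_lt_compat_l; lra).
    replace (th * P * rho ^ (2 * (3 * i + 4))) with (P * (rho ^ (2 * (3 * i + 4)) * th)) in A4 by ring.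
    lra.
Qed.
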